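(* Let $\mathfrak{D}=[a,b]=\prod_{i=1}^d [a_i,b_i]\subseteq\mathbb{R}^d$ with $a_i<b_i$, and let $n_0\ge 1$ and $t\ge 1$ be integers. Consider a stochastic algorithm which, at each iteration $n\ge n_0$, generates random candidate points $Y_{n,1},\dots,Y_{n,t}\in\mathfrak{D}$ as follows. Let $\mathcal{E}_{n-1}$ denote the collection of all random vectors generated before iteration $n$, and $\sigma(\mathcal{E}_{n-1})$ the $\sigma$-field they generate; the current best point $x_n^*\in\mathfrak{D}$ is $\sigma(\mathcal{E}_{n-1})$-measurable. For each $j=1,\dots,t$ and each coordinate $i=1,\dots,d$, conditionally on $\sigma(\mathcal{E}_{n-1})$ and independently over $i$: with probability $P_{n,i}$ the coordinate is perturbed, i.e. $\tilde Y_{n,j,i}=x^*_{n,i}+Z_{n,j,i}$, where $Z_{n,j,i}$ has a continuous (conditional) probability density $F_{n,j,i}$ on $\mathbb{R}$; otherwise $\tilde Y_{n,j,i}=x^*_{n,i}$. If $\tilde Y_{n,j}\notin\mathfrak{D}$ it is replaced by a point of $\mathfrak{D}$ (e.g. the nearest point in $\mathfrak{D}$), and $Y_{n,j}$ is the resulting point; if $\tilde Y_{n,j}\in\mathfrak{D}$ then $Y_{n,j}=\tilde Y_{n,j}$. Here $P_{n,i}$ and $F_{n,j,i}$ may depend on $\sigma(\mathcal{E}_{n-1})$. Suppose there exist constants $C_1>0$ and $C_2>0$ such that for every $n\ge n_0$, every $1\le i\le d$ and every $j=1,\dots,t$, we have $P_{n,i}>C_1$ and $F_{n,j,i}(z)>C_2$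 for all $z\in[-(b_i-a_i),\,b_i-a_i]$. Then the following condition holds: for every $j=1,\dots,t$, every $x\in\mathfrak{D}$ and every $\delta>0$ there exists $\nu_j(x,\delta)>0$ such that $$P\big[Y_{n,j}\in B(x,\delta)\cap\mathfrak{D}\ \big|\ \sigma(\mathcal{E}_{n-1})\big]\ge \nu_j(x,\delta)\quad\text{almost surely, for all } n\ge n_0,$$ where $B(x,\delta)$ is the open Euclidean ball of radius $\delta$ centered at $x$.
   Context: This is the candidate-point generation step of a stochastic response-surface global optimization method on the box $\mathfrak{D}$; the candidate points are perturbations of the current best point $x_n^*$ in a random subset of coordinates. The conclusion is the condition (called Condition [2] in the paper) under which such methods converge to the global minimum almost surely. *)

(* Defs.v *)
From HB Require Import structures.
From mathcomp Require Import all_boot all_order all_algebra.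
From mathcomp Require Import all_classical all_reals all_analysis measurable_realfun.
Set Implicit Arguments. Unset Strict Implicit. Unset Printing Implicit Defensive.
Import Order.TTheory GRing.Theory Num.Theory.
Import numFieldNormedType.Exports.
Local Open Scope classical_set_scope.
Local Open Scope ring_scope.

Section Defs.
Variable R : realType.

Definition box (d : nat) (a b : 'I_d -> R) : set ('I_d -> R) :=
  [set y | forall i, a i <= y i <= b i].

Definition eball (d : nat) (x : 'I_d -> R) (delta : R) : set ('I_d -> R) :=
  [set y | \sum_(i < d) (y i - x i) ^+ 2 < delta ^+ 2].

Variables (dO : measure_display) (Omega : measurableType dO).

Definition sub_sigma (G : set (set Omega)) : Prop :=
  sigma_algebra setT G /\ G `<=` measurable.

Definition Gmeas (G : set (set Omega)) (h : Omega -> R) : Prop :=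
  forall S : set R, measurable S -> G (h @^-1` S).
Definition Gmeas_e (G : set (set Omega)) (h : Omega -> \bar R) : Prop :=
  forall S : set (\bar R), measurable S -> G (h @^-1` S).

Definition cond_prob_version (P : probability Omega R) (G : set (set Omega))
    (A : set Omega) (Q : Omega -> R) : Prop :=
  Gmeas G Q /\
  forall G0, G G0 -> (\int[P]_(w in G0) (Q w)%:E = P (A `&` G0))%E.

(* Conditionally on G, the pairs (B_i, Z_i), i < d, are independent, B_i is
   Bernoulli(p_i) and independent of Z_i, and Z_i has density f_i:
   the conditional joint law on all measurable rectangles. *)
Definition cond_law (d : nat) (P : probability Omega R) (G : set (set Omega))
    (p : 'I_d -> Omega -> R) (f : 'I_d -> Omega -> R -> R)
    (B : 'I_d -> Omega -> bool) (Z : 'I_d -> Omega -> R) : Prop :=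
  forall (A : set Omega) (s : 'I_d -> bool) (S : 'I_d -> set R),
    G A -> (forall i, measurable (S i)) ->
    P [set w | A w /\ forall i, B i w = s i /\ S i (Z i w)] =
    (\int[P]_(w in A)
       \prod_(i < d) ((if s i then p i w else 1 - p i w)%:E *
                      \int[lebesgue_measure]_(z in S i) (f i w z)%:E))%E.

End Defs.

(* Main.v *)
Require Import Defs.
From HB Require Import structures.
From mathcomp Require Import all_boot all_order all_algebra.
From mathcomp Require Import all_classical all_reals all_analysis measurable_realfun.
From mathcomp Require Import lra ring.
Import Order.TTheory GRing.Theory Num.Theory.
Import numFieldNormedType.Exports.
Local Open Scope classical_set_scope.
Local Open Scope ring_scope.

Lemma finI (T : Type) (I : finType) (F : set (set T)) (X : I -> set T) :
  F setT -> (forall A B, F A -> F B -> F (A `&` B)) -> (forall i, F (X i)) ->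
  F [set w | forall i, X i w].
Proof.
move=> FT FI FX.
suff H : forall s : seq I, F [set w | forall i, i \in s -> X i w].
  have -> : [set w | forall i, X i w] = [set w | forall i, i \in enum I -> X i w].
    apply/seteqP; split=> w /= Hw i; first by move=> _; exact: Hw.
    by apply: Hw; rewrite mem_enum.
  exact: H.
elim=> [|i0 s IH].
  have -> : [set w | forall i, i \in [::] -> X i w] = setT.
    by apply/seteqP; split => // w _ i; rewrite in_nil.
  exact: FT.
have -> : [set w | forall i, i \in i0 :: s -> X i w] =
   X i0 `&` [set w | forall i, i \in s -> X i w].
  apply/seteqP; split=> w /=.
    move=> H; split; first by apply: H; rewrite inE eqxx.
    by move=> i iS; apply: H; rewrite inE iS orbT.
  by move=> [H0 H] i; rewrite inE => /orP [/eqP -> //| /H].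
exact: FI.
Qed.

Lemma sigma_setI T (G : set (set T)) : sigma_algebra setT G ->
  forall A B, G A -> G B -> G (A `&` B).
Proof.
move=> [G0 GC GU] A B GA GB.
have GU2 X Y : G X -> G Y -> G (X `|` Y).
  move=> GX GY; have -> : X `|` Y = \bigcup_k (fun k => if k is 0%N then X else Y) k.
    apply/seteqP; split=> w.
      by case=> ?; [exists 0%N | exists 1%N].
    by case=> -[|k] _ /=; [left|right].
  by apply: GU => -[|k].
have -> : A `&` B = setT `\` ((setT `\` A) `|` (setT `\` B)).
  by rewrite !setTD setCU !setCK.
by apply: (GC); apply: (GU2); apply: (GC).
Qed.


Lemma exists_L (R : realType) (I : finType) (g : I -> R) (e : R) :
  0 < e -> (forall i, 0 < g i) ->
  exists L, [/\ 0 < L, L <= e & forall i, L <= g i].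
Proof.
move=> e0 g0.
suff H : forall s : seq I, exists L, [/\ 0 < L, L <= e & forall i, i \in s -> L <= g i].
  have [L [L0 Le Lg]] := H (enum I); exists L; split => // i.
  by apply: Lg; rewrite mem_enum.
elim=> [|i0 s [L [L0 Le Lg]]]; first by exists e; split.
exists (Num.min L (g i0)); split.
- by rewrite lt_min L0 g0.
- by rewrite ge_min Le.
- move=> i; rewrite inE => /orP [/eqP ->|iS]; first by rewrite ge_min lexx orbT.
  by rewrite ge_min Lg.
Qed.

Lemma exists_M (R : realType) (I : finType) (g : I -> R) :
  exists M : nat, forall i, g i < M%:R.
Proof.
suff H : forall s : seq I, exists M : nat, forall i, i \in s -> g i < M%:R.
  have [M HM] := H (enum I); exists M => i; apply: HM; by rewrite mem_enum.
elim=> [|i0 s [M HM]]; first by exists 0%N.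
exists (maxn M (Num.truncn `|g i0|).+1) => i; rewrite inE => /orP [/eqP ->|iS].
  apply: (le_lt_trans (ler_norm _)).
  apply: (lt_le_trans (y := (Num.truncn `|g i0|).+1%:R)).
    by have /andP[] := truncn_itv (normr_ge0 (g i0)).
  by rewrite ler_nat leq_maxr.
apply: (lt_le_trans (HM _ iS)).
by rewrite ler_nat leq_maxl.
Qed.

Section prods.
Context (R : realType) (dd : measure_display) (T : measurableType dd).
Local Open Scope ereal_scope.
Lemma prod_meas (D : set T) (I : Type) (s : seq I) (g : I -> T -> \bar R) :
  (forall i, measurable_fun D (g i)) ->
  measurable_fun D (fun w => \prod_(i <- s) g i w).
Proof.
move=> mg; elim: s => [|i s IH].
  under eq_fun do rewrite big_nil; exact: measurable_cst.
under eq_fun do rewrite big_cons; exact: emeasurable_funM.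
Qed.

Lemma prod_le (I : Type) (s : seq I) (c : \bar R) (g : I -> \bar R) :
  0 <= c -> (forall i, c <= g i) -> \prod_(i <- s) c <= \prod_(i <- s) g i.
Proof.
move=> c0 cg; elim: s => [|i s IH]; first by rewrite !big_nil.
rewrite !big_cons; apply: lee_pmul => //.
exact: prode_ge0.
Qed.
End prods.

Lemma final_step (R : realType) (dO : measure_display) (Omega : measurableType dO)
  (P : probability Omega R) (G : set (set Omega)) (E : set Omega) (Q : Omega -> R)
  (K : finType) (cell : K -> set Omega) (c : R) :
  sub_sigma G -> cond_prob_version P G E Q -> 0 < c ->
  (forall k, G (cell k)) -> (forall w, exists k, cell k w) ->
  (forall k A, G A -> A `<=` cell k -> (c%:E * P A <= P (E `&` A))%E) ->
  {ae P, forall w, c / 2 <= Q w}.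
Proof.
move=> [sG GM] [QG QI] c0 Gc cov Hc.
set nu := c / 2.
have mQ : measurable_fun setT Q by move=> _ Y mY; rewrite setTI; apply: GM; apply: QG.
pose N k := (Q @^-1` `]-oo, nu[) `&` cell k.
have GN k : G (N k) by apply: sigma_setI => //; apply: QG; exact: measurable_itv.
have PN k : P (N k) = 0%E.
  have mN := GM _ (GN k).
  have h1 := QI _ (GN k).
  have h2 := Hc k (N k) (GN k) (@subIsetr _ _ _).
  have h3 : (\int[P]_(w in N k) (Q w)%:E <= nu%:E * P (N k))%E.
    rewrite integralE.
    apply: (@le_trans _ _ (\int[P]_(x in N k) (fun x0 => (Q x0)%:E)^\+ x)%E).
      rewrite -[X in (_ <= X)%E]sube0; apply: leeB => //.
      by apply: integral_ge0 => x _; exact: funeneg_ge0.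
    rewrite -integral_cst //.
    apply: ge0_le_integral => //.
    - apply: measurable_funepos; apply/measurable_EFinP.
      exact: measurable_funS mQ.
    - move=> w [/= Hw _]; rewrite funeposE /= ge_max lee_fin.
      rewrite in_itv /= in Hw; rewrite (ltW Hw) /=.
      by rewrite lee_fin /nu divr_ge0 // ltW.
  have Pge := measure_ge0 P (N k).
  have [r Pr] : exists r, P (N k) = r%:E.
    by exists (fine (P (N k))); rewrite fineK // fin_num_measure.
  rewrite Pr in h2 h3 Pge *.
  have : (c%:E * r%:E <= nu%:E * r%:E)%E by rewrite (le_trans h2) // -h1.
  rewrite -!EFinM lee_fin => hr.
  have Pr0 : 0 <= r by rewrite -lee_fin -Pr; exact: measure_ge0.
  rewrite /nu in hr; congr EFin.
  apply/eqP; rewrite eq_le Pr0 andbT.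
  have : 0 <= c * r / 2 by rewrite mulr_ge0 // mulr_ge0 // ltW.
  nra.
have NN : P.-negligible (\big[setU/set0]_(k : K) N k).
  apply: big_ind => //.
  - exact: negligible_set0.
  - by move=> ? ?; exact: negligibleU.
  - by move=> k _; exists (N k); split => //; exact: GM.
apply: negligibleS NN => w /= Hw.
have [k ck] := cov w.
rewrite (bigD1 k) //=; left; split => //=.
by rewrite in_itv /= ltNge; apply/negP.
Qed.

Theorem proposition1 (R : realType) (d t n0 : nat) (a b : 'I_d -> R)
  (dO : measure_display) (Omega : measurableType dO) (P : probability Omega R)
  (G : nat -> set (set Omega))
  (xs : nat -> 'I_d -> Omega -> R)
  (p : nat -> 'I_d -> Omega -> R)
  (f : nat -> 'I_t -> 'I_d -> Omega -> R -> R)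
  (B : nat -> 'I_t -> 'I_d -> Omega -> bool)
  (Z : nat -> 'I_t -> 'I_d -> Omega -> R)
  (Y : nat -> 'I_t -> 'I_d -> Omega -> R)
  (C1 C2 : R) :
  (forall i, a i < b i) -> (1 <= n0)%N -> (1 <= t)%N ->
  (* structure of the algorithm at every iteration n >= n0 *)
  (forall n, (n0 <= n)%N ->
     [/\ sub_sigma (G n),
         (forall i, Gmeas (G n) (xs n i)),
         (forall w, box a b (fun i => xs n i w)),
         (forall i, Gmeas (G n) (p n i) /\ forall w, 0 <= p n i w <= 1) &
         forall j : 'I_t,
         [/\ forall i w, continuous (f n j i w) /\ (forall z, 0 <= f n j i w z) /\
               (\int[lebesgue_measure]_z (f n j i w z)%:E = 1)%E,
             forall i (S : set R), measurable S ->
               Gmeas_e (G n) (fun w => \int[lebesgue_measure]_(z in S) (f n j i w z)%:E)%E,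
             forall i, measurable [set w | B n j i w] /\ measurable_fun setT (Z n j i),
             cond_law P (G n) (p n) (f n j) (B n j) (Z n j) &
             forall i, measurable_fun setT (Y n j i) /\
             forall w,
               box a b (fun i => Y n j i w) /\
               (box a b (fun i => xs n i w + (if B n j i w then Z n j i w else 0)) ->
                forall i, Y n j i w = xs n i w + (if B n j i w then Z n j i w else 0))]]) ->
  (* the lower bounds *)
  0 < C1 -> 0 < C2 ->
  (forall n, (n0 <= n)%N -> forall i w, C1 < p n i w) ->
  (forall n, (n0 <= n)%N -> forall (j : 'I_t) i w z,
      - (b i - a i) <= z <= b i - a i -> C2 < f n j i w z) ->
  (* Condition [2] *)
  forall (j : 'I_t) (x : 'I_d -> R), box a b x ->
  forall delta : R, 0 < delta ->
  exists nu : R, 0 < nu /\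
    forall n, (n0 <= n)%N ->
    forall Q : Omega -> R,
      cond_prob_version P (G n)
        [set w | eball x delta (fun i => Y n j i w) /\ box a b (fun i => Y n j i w)] Q ->
      {ae P, forall w, nu <= Q w}.

Proof.
move=> ab n01 t1 Hst C10 C20 Hp Hf j x xbox delta d0.
have ba0 i : 0 < b i - a i by rewrite subr_gt0.
pose eta := delta / (d%:R + 1).
have d10 : 0 < d%:R + 1 :> R by rewrite ltr_wpDl.
have eta0 : 0 < eta by rewrite divr_gt0.
have [L [L0 Leta Lba]] := @exists_L R _ (fun i => b i - a i) eta eta0 ba0.
pose h := L / 3.
have h0 : 0 < h by rewrite divr_gt0.
have hL : L = h + h + h by rewrite /h; field.
have [M HM] := @exists_M R _ (fun i : 'I_d => (b i - a i) / h).
pose c := (C1 * (C2 * h)) ^+ d.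
have c0 : 0 < c by rewrite exprn_gt0 // !mulr_gt0.
exists (c / 2); split; first by rewrite divr_gt0.
move=> n nn Q HQ.
have [sG Gxs xsbox Gp Hj] := Hst n nn.
have [fprop Gint BZm claw Yprop] := Hj j.
have GM := sG.2.
pose u i := Num.min (x i) (b i - L).
pose cc (k : {ffun 'I_d -> 'I_M}) i := a i + (k i)%:R * h.
pose cell (k : {ffun 'I_d -> 'I_M}) :=
  [set w | forall i, (xs n i @^-1` `[cc k i - h, cc k i + h]) w].
pose S (k : {ffun 'I_d -> 'I_M}) i := [set` `[u i - cc k i + h, u i - cc k i + h + h]] : set R.
pose Ev := [set w | eball x delta (fun i => Y n j i w) /\ box a b (fun i => Y n j i w)].
apply: (@final_step R dO Omega P (G n) Ev Q {ffun 'I_d -> 'I_M} cell c sG HQ c0).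
- move=> k; apply: finI.
  + have [G0 GC _] := sG.1.
    by rewrite -(setD0 setT); apply: GC.
  + exact: sigma_setI sG.1.
  + move=> i; apply: Gxs; exact: measurable_itv.
- move=> w.
  have Hk i : (Num.truncn ((xs n i w - a i) / h) < M)%N.
    have /andP [al bl] := xsbox w i.
    rewrite truncn_lt_nat; last by rewrite divr_ge0 // ?subr_ge0 // ltW.
    apply: le_lt_trans (HM i); rewrite ler_pM2r ?invr_gt0 //; lra.
  exists [ffun i => Ordinal (Hk i)] => i /=.
  rewrite /= in_itv /=.
  have /andP [al bl] := xsbox w i.
  have y0 : 0 <= (xs n i w - a i) / h by rewrite divr_ge0 // ?subr_ge0 // ltW.
  have /andP[t1' t2'] := truncn_itv y0.
  have hy : (xs n i w - a i) / h * h = xs n i w - a i by rewrite divfK // gt_eqF.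
  move: t1' t2' hy; rewrite -addn1 natrD.
  set y := (xs n i w - a i) / h; set tt := (Num.truncn y)%:R.
  move=> t1' t2' hy; rewrite /cc /=.
  rewrite ffunE /= -/tt; apply/andP; split; nra.
- move=> k A GA Acell.
  have mA := GM _ GA.
  have cellw w : A w -> forall i, cc k i - h <= xs n i w <= cc k i + h.
    by move=> Aw i; have := Acell w Aw i; rewrite /= in_itv.
  have key w i z : A w -> S k i z -> u i <= xs n i w + z <= u i + L.
    move=> Aw; rewrite /S /= in_itv /= => /andP [z1 z2].
    have /andP [e1 e2] := cellw w Aw i.
    by apply/andP; split; lra.
  have ua i : a i <= u i.
    have /andP [x1 x2] := xbox i; have := Lba i.
    by rewrite /u le_min => ?; apply/andP; split; lra.
  have ub i : u i + L <= b i.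
    have : u i <= b i - L by rewrite /u ge_min lexx orbT.
    lra.
  have ux i : x i - L <= u i <= x i.
    have /andP [x1 x2] := xbox i.
    rewrite /u le_min ge_min lexx /=; apply/andP; split => //; apply/andP; split; lra.
  pose Sub := [set w | A w /\ forall i, B n j i w = true /\ S k i (Z n j i w)].
  have claw' := claw A (fun _ => true) (S k) GA (fun i => measurable_itv _).
  have mZ i := (BZm i).2.
  have mB i := (BZm i).1.
  have mY i := (Yprop i).1.
  have mSub : measurable Sub.
    have -> : Sub = A `&` [set w | forall i, ([set w | B n j i w] `&` (Z n j i @^-1` S k i)) w] by [].
    apply: measurableI => //; apply: finI => //.
    + by move=> ? ? ? ?; exact: measurableI.
    + move=> i; apply: measurableI => //.
      rewrite -[X in measurable X]setTI; apply: mZ => //; exact: measurable_itv.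
  have mEv : measurable Ev.
    have -> : Ev = ((fun w => \sum_(i < d) (Y n j i w - x i) ^+ 2) @^-1` `]-oo, delta ^+ 2[) `&`
                   [set w | forall i, (Y n j i @^-1` `[a i, b i]) w].
      apply/seteqP; split => w [H1 H2].
        split; first by rewrite /= in_itv /=.
        by move=> i /=; rewrite in_itv /=; exact: H2.
      split; first by move: H1; rewrite /= in_itv /=.
      by move=> i; have := H2 i; rewrite /= in_itv /=.
    apply: measurableI.
      rewrite -[X in measurable X]setTI.
      apply: (measurable_sum (index_enum _) (h := fun i w => (Y n j i w - x i) ^+ 2)) => //.
        move=> i; apply: measurable_funX; apply: measurable_funB => //; exact: measurable_cst.
    apply: finI => //.
    + by move=> ? ? ? ?; exact: measurableI.
    + move=> i; rewrite -[X in measurable X]setTI; apply: mY => //; exact: measurable_itv.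
  have subE : Sub `<=` Ev `&` A.
    move=> w [Aw HB].
    have HY i : Y n j i w = xs n i w + Z n j i w.
      have [_ Himp] := (Yprop i).2 w.
      rewrite (Himp _ i) ?(HB i).1 //.
      move=> i0 /=; rewrite (HB i0).1.
      have := key w i0 _ Aw (HB i0).2; have := ua i0; have := ub i0.
      move=> ? ? /andP [? ?]; apply/andP; split; lra.
    split => //; split.
      rewrite /eball /=.
      apply: (@le_lt_trans _ _ (\sum_(i < d) eta ^+ 2)).
        apply: ler_sum => i _; rewrite HY.
        have /andP [k1 k2] := key w i _ Aw (HB i).2.
        have /andP [u1 u2] := ux i.
        have e1 : - eta <= xs n i w + Z n j i w - x i by lra.
        have e2 : xs n i w + Z n j i w - x i <= eta by lra.
        nra.
      rewrite sumr_const card_ord -mulr_natr.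
      have he : eta * (d%:R + 1) = delta by rewrite /eta divfK // gt_eqF.
      have dge : 0 <= d%:R :> R by [].
      nra.
    move=> i /=; rewrite HY.
    have := key w i _ Aw (HB i).2; have := ua i; have := ub i.
    move=> ? ? /andP [? ?]; apply/andP; split; lra.
  have step2 : (P Sub <= P (Ev `&` A))%E.
    by apply: le_measure => //; rewrite inE //; exact: measurableI.
  apply: le_trans step2.
  rewrite claw' /= -integral_cst //.
  apply: ge0_le_integral => //.
  - by move=> w _; rewrite lee_fin ltW.
  - apply: prod_meas => i; apply: emeasurable_funM.
      apply/measurable_EFinP; apply: (measurable_funS (E := setT)) => //.
      by move=> _ Y0 mY0; rewrite setTI; apply: GM; apply: (Gp i).1.
    apply: (measurable_funS (E := setT)) => //.
    move=> _ Y0 mY0; rewrite setTI; apply: GM; apply: Gint => //.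
    exact: measurable_itv.
  move=> w Aw.
  have -> : c = \prod_(i < d) (C1 * (C2 * h)) by rewrite prodr_const card_ord.
  rewrite -prodEFin; apply: prod_le; first by rewrite lee_fin !mulr_ge0 // ltW.
  move=> i; rewrite EFinM; apply: lee_pmul.
  - by rewrite lee_fin ltW.
  - by rewrite lee_fin mulr_ge0 // ltW.
  - by rewrite lee_fin ltW // Hp.
  have -> : ((C2 * h)%:E = \int[lebesgue_measure]_(z in S k i) (cst C2%:E) z)%E.
    rewrite integral_cst; last exact: measurable_itv.
    have hS : lebesgue_measure (S k i) = h%:E.
      rewrite /S lebesgue_measure_itv /= lte_fin ltrDl h0 -EFinD; congr EFin; ring.
    apply: (@eq_trans _ _ (C2%:E * lebesgue_measure (S k i))%E); last reflexivity.
    by rewrite hS -EFinM.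
  apply: ge0_le_integral.
  - exact: measurable_itv.
  - by move=> z _; rewrite lee_fin ltW.
  - exact: measurable_cst.
  - apply/measurable_EFinP; apply: (measurable_funS (E := setT)) => //.
    exact: continuous_measurable_fun (fprop i w).1.
  move=> z Sz; rewrite lee_fin; apply: ltW; apply: Hf => //.
  have := key w i z Aw Sz; have := ua i; have := ub i; have := xsbox w i.
  move=> /andP [? ?] ? ? /andP [? ?]; apply/andP; split; lra.
Qed.
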